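(* There exists a function $f : \mathbb{N}^{\mathbb{N}} \to \mathbb{N}$ such that Player I has a winning strategy in $\Gamma(f)$, and $C \cap \{f \ge r\}$ is uncountable for each $r \in \mathbb{R}$ and each Cantor set $C \subseteq \mathbb{N}^{\mathbb{N}}$.
   Context: Here $X = \mathbb{N}^{\mathbb{N}}$ (the branches of the full tree of finite sequences of natural numbers) with the product topology. A Cantor set is a subset homeomorphic to the middle-thirds Cantor set. $\{f \ge r\} = \{x : f(x) \ge r\}$. The game $\Gamma(f)$: Player I and Player II alternate, Player I moving first; Player I plays natural numbers $x_0, x_1, \dots$, and after each move $x_t$ Player II plays a real number $v_t$. Player II wins the run iff $f(x_0,x_1,\dots) = \limsup_{t\to\infty} v_t$; otherwise Player I wins. *)

(* Defs.v *)
From HB Require Import structures.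
From mathcomp Require Import all_boot all_order all_algebra.
From mathcomp Require Import all_classical all_reals all_analysis.
From mathcomp Require Import Rstruct Rstruct_topology.
Set Implicit Arguments. Unset Strict Implicit. Unset Printing Implicit Defensive.
Import Order.TTheory GRing.Theory Num.Theory.
Local Open Scope classical_set_scope.
Local Open Scope ring_scope.

Notation RR := Rdefinitions.R.

(* Baire space N^N: [nat -> nat] with the product topology of discrete [nat]
   ([{ptws nat -> nat}] = prod_topology, convertible to nat -> nat). *)
Notation baire := {ptws nat -> nat}.

Fixpoint cantor_stage (n : nat) : set RR :=
  match n with
  | 0 => `[0, 1]%classic
  | n.+1 => ((fun x : RR => x / 3) @` cantor_stage n) `|`
            ((fun x : RR => (x + 2) / 3) @` cantor_stage n)
  end.

Definition middle_thirds_cantor : set RR := \bigcap_(n in setT) cantor_stage n.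

Definition homeomorphic_sets (T U : topologicalType) (A : set T) (B : set U) :=
  exists (h : T -> U) (g : U -> T),
    [/\ (forall x, A x -> B (h x)), (forall y, B y -> A (g y)),
        (forall x, A x -> g (h x) = x) & (forall y, B y -> h (g y) = y)] /\
    {within A, continuous h} /\ {within B, continuous g}.

Definition is_cantor_set (C : set baire) :=
  @homeomorphic_sets baire RR C middle_thirds_cantor.

(* A strategy for Player I chooses x_t from the moves
   v_0, ..., v_{t-1} of Player II played so far (Player I's own earlier moves
   are determined by these). *)
Definition strategyI := seq RR -> nat.

Definition play_I (sigma : strategyI) (v : nat -> RR) : baire :=
  fun t => sigma (mkseq v t).

Definition II_wins_run (f : baire -> nat) (x : baire) (v : nat -> RR) : Prop :=
  ((f x)%:R : RR)%:E = limn_esup (fun t => (v t)%:E).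

(* Player I has a winning strategy: against every sequence of replies of
   Player II (equivalently every strategy of II), Player I wins. *)
Definition I_has_winning_strategy (f : baire -> nat) : Prop :=
  exists sigma : strategyI, forall v : nat -> RR,
    ~ II_wins_run f (play_I sigma v) v.

(* Main.v *)
Require Import Defs.
From mathcomp Require Import all_boot all_order all_algebra.
From mathcomp Require Import all_classical all_reals all_analysis.
From mathcomp Require Import Rstruct Rstruct_topology.
From mathcomp Require Import wochoice.
From mathcomp Require Import lra.
Import Order.TTheory GRing.Theory Num.Theory.
Local Open Scope classical_set_scope.
Local Open Scope ring_scope.
Lemma esup_lt (u : nat -> RR) (a : RR) :
  (limn_esup (fun t => (u t)%:E) < a%:E)%E -> exists N, forall t, (N <= t)%N -> u t < a.
Proof.
rewrite limn_esup_lim (cvg_lim _ (@cvg_esups_inf _ (fun t => (u t)%:E)))//.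
move=> /ereal_inf_lt [y [N _ <-]] HN; exists N => t Nt.
rewrite -lte_fin; apply: le_lt_trans HN.
by apply: ereal_sup_ubound; exists t.
Qed.

Lemma esup_gt (u : nat -> RR) (a : RR) :
  (a%:E < limn_esup (fun t => (u t)%:E))%E -> forall N, exists t, (N <= t)%N /\ a < u t.
Proof.
rewrite limn_esup_lim (cvg_lim _ (@cvg_esups_inf _ (fun t => (u t)%:E)))//.
move=> H N.
have : (a%:E < esups (fun t => (u t)%:E) N)%E.
  apply: (lt_le_trans H); apply: ereal_inf_lbound; by exists N.
move=> /ereal_sup_gt [y [t Nt <-]] Ht; exists t; split => //.

Qed.

Definition sigma0 : strategyI := fun s =>
  if s is [::] then 0%N else Num.trunc (nth 0 s (size s).-1 + 3/2).

Lemma play_sigma0 v t : play_I sigma0 v t.+1 = Num.trunc (v t + 3/2).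
Proof.
rewrite /play_I /sigma0.
case E: (mkseq v t.+1) => [|a l]; first by move: (size_mkseq v t.+1); rewrite E.
by rewrite -E size_mkseq /= nth_mkseq.
Qed.

Definition Pbad (x : baire) (n : nat) :=
  (exists N, forall t, (N <= t)%N -> (x t <= n.+1)%N) /\
  (forall N, exists t, (N <= t)%N /\ (n.+1 <= x t)%N).

Lemma Pbad_uniq x n m : Pbad x n -> Pbad x m -> n = m.
Proof.
move=> [[N1 H1] H1'] [[N2 H2] H2'].
apply/eqP; rewrite eqn_leq; apply/andP; split.
  have [t [Nt Ht]] := H1' N2. by have := leq_trans Ht (H2 _ Nt).
have [t [Nt Ht]] := H2' N1. by have := leq_trans Ht (H1 _ Nt).
Qed.

Definition bad (x : baire) : nat :=
  match pselect (exists n, Pbad x n) with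
  | left h => projT1 (cid h)
  | right _ => 0%N
  end.

Lemma badP x n : Pbad x n -> bad x = n.
Proof.
move=> H; rewrite /bad; case: pselect => [h|h]; last by exfalso; apply: h; exists n.
by case: (cid h) => m Hm /=; apply: Pbad_uniq Hm H.
Qed.

Lemma sigma0_bad (v : nat -> RR) (n : nat) :
  II_wins_run (fun _ => n) (play_I sigma0 v) v -> bad (play_I sigma0 v) = n.
Proof.
rewrite /II_wins_run => H; apply: badP; split.
  have : (limn_esup (fun t => (v t)%:E) < (n%:R + 1/2)%:E)%E.
    rewrite -H lte_fin ltrDl; lra.
  move=> /esup_lt [N HN]; exists N.+1 => -[//|t] Nt.
  rewrite play_sigma0 truncn_le_nat.
  have := HN t Nt; rewrite -[(n.+2)%:R]natr1 -[(n.+1)%:R]natr1; lra.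
have : ((n%:R - 1/2)%:E < limn_esup (fun t => (v t)%:E))%E.
  rewrite -H lte_fin; lra.
move=> /esup_gt HN N; have [t [Nt Ht]] := HN N.
exists t.+1; split; first by apply: leqW.
rewrite play_sigma0 truncn_gt_nat -[(n.+1)%:R]natr1; lra.
Qed.
Fixpoint aa (s : seq bool) : RR :=
  if s is b :: s' then (aa s' + 2 * (b : nat)%:R) / 3 else 0.

Definition pre (b : nat -> bool) n : seq bool := mkseq b n.
Definition tl (b : nat -> bool) : nat -> bool := fun k => b k.+1.

Lemma preS b n : pre b n.+1 = b 0%N :: pre (tl b) n.
Proof.
apply: (@eq_from_nth _ false); first by rewrite /pre size_mkseq /= size_mkseq.
move=> i; rewrite /pre size_mkseq => Hi; rewrite nth_mkseq //.
case: i Hi => [|i] Hi //=; rewrite nth_mkseq //.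
Qed.

Lemma bit_bound (c : bool) : 0 <= ((c : nat)%:R : RR) <= 1.
Proof. by case: c => /=; rewrite ?ler01 ?lexx. Qed.

Lemma aa_bound s : 0 <= aa s <= 1.
Proof.
elim: s => [|c s IH] /=; first by rewrite lexx ler01.
have := bit_bound c; move: IH; move: ((c : nat)%:R) => z; move: (aa s) => t.
move=> /andP [H1 H2] /andP [H3 H4]; apply/andP; split.
  by apply: divr_ge0; lra.
by rewrite ler_pdivrMr; lra.
Qed.

Lemma aa_mono b n : aa (pre b n) <= aa (pre b n.+1).
Proof.
elim: n b => [|n IH] b.
  rewrite preS /pre /= ; have := bit_bound (b 0%N); move: ((b 0%N : nat)%:R) => z.
  move=> /andP [H1 H2]. by apply: divr_ge0; lra.
rewrite [pre b n.+1]preS [pre b n.+2]preS /=.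
rewrite ler_pdivrMr // divfK //; rewrite lerD2r; exact: IH.
Qed.

Definition ee (b : nat -> bool) : RR := sup (range (fun n => aa (pre b n))).

Lemma ee_ub b : has_ubound (range (fun n => aa (pre b n))).
Proof. by exists 1 => _ [n _ <-]; have /andP[] := aa_bound (pre b n). Qed.

Lemma ee_cvg b : (fun n => aa (pre b n)) @ \oo --> ee b.
Proof.
apply: nondecreasing_cvgn; last exact: ee_ub.
by apply/nondecreasing_seqP => n; apply: aa_mono.
Qed.

Lemma ee_bound b : 0 <= ee b <= 1.
Proof.
apply/andP; split.
  apply: (@le_trans _ _ (aa (pre b 0))); first by have /andP[] := aa_bound (pre b 0).
  by apply: ub_le_sup; [exact: ee_ub|exists 0%N].
apply: ge_sup; first by exists (aa (pre b 0)), 0%N.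
by move=> _ [n _ <-]; have /andP[] := aa_bound (pre b n).
Qed.

Lemma ee_rec b : ee b = (ee (tl b) + 2 * (b 0%N : nat)%:R) / 3.
Proof.
have H1 := ee_cvg b; rewrite -cvg_shiftS in H1.
have H2 : (fun n => (aa (pre (tl b) n) + 2 * (b 0%N : nat)%:R) / 3) @ \oo -->
           (ee (tl b) + 2 * (b 0%N : nat)%:R) / 3.
  apply: cvgMr_tmp. apply: (@cvgD _ RR^o); [exact: ee_cvg|exact: cvg_cst].
have H3 : (fun n => aa (pre b n.+1)) @ \oo --> (ee (tl b) + 2 * (b 0%N : nat)%:R) / 3.
  suff -> : (fun n => aa (pre b n.+1)) =
    (fun n => (aa (pre (tl b) n) + 2 * (b 0%N : nat)%:R) / 3) by [].
  by apply: funext => n; rewrite preS.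
exact: (@cvg_unique _ (@Rhausdorff RR) _ _ _ _ H1 H3).
Qed.
Lemma stage_step m x (c : bool) :
  cantor_stage m x -> cantor_stage m.+1 ((x + 2 * (c : nat)%:R) / 3).
Proof.
case: c => H /=; [right|left]; exists x => //.
  by rewrite mulr1.
by rewrite mulr0 addr0.
Qed.

Lemma ee_stage m : forall b, cantor_stage m (ee b).
Proof.
elim: m => [|m IH] b.
  by rewrite /= in_itv /= ee_bound.
rewrite ee_rec; apply: stage_step; exact: IH.
Qed.

Lemma aa_stage m : forall s, cantor_stage m (aa s).
Proof.
elim: m => [|m IH] s.
  by rewrite /= in_itv /= aa_bound.
case: s => [|c s].
  have := @stage_step m 0 false (IH [::]); by rewrite /= mulr0 addr0 mul0r.
exact: (@stage_step m _ c (IH s)).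
Qed.

Lemma inK x : (forall m, cantor_stage m x) -> middle_thirds_cantor x.
Proof. by move=> H n _; apply: H. Qed.

Lemma ee_inj0 b b' : ee b = ee b' -> b 0%N = b' 0%N.
Proof.
rewrite (ee_rec b) (ee_rec b').
have /andP[h1 h2] := ee_bound (tl b); have /andP[h3 h4] := ee_bound (tl b').
case: (b 0%N); case: (b' 0%N) => //= E; exfalso; move: E; lra.
Qed.

Lemma ee_inj : injective ee.
Proof.
move=> b b' E; apply: funext => k; elim: k b b' E => [|k IH] b b' E.
  exact: (ee_inj0 _ _ E).
have h0 := ee_inj0 _ _ E.
have : ee (tl b) = ee (tl b').
  move: E; rewrite (ee_rec b) (ee_rec b') h0; lra.
by move/IH.
Qed.
Lemma cont_seq (g : RR -> baire) (u : nat -> RR) l :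
  {within middle_thirds_cantor, continuous g} ->
  (forall n, middle_thirds_cantor (u n)) -> middle_thirds_cantor l ->
  u @ \oo --> l ->
  forall k, exists N, forall n, (N <= n)%N -> g (u n) k = g l k.
Proof.
move=> gc uK lK ul k.
have H1 : g @ within middle_thirds_cantor (nbhs l) --> g l.
  by move/subspace_continuousP : gc; apply.
have H2 : u @ \oo --> within middle_thirds_cantor (nbhs l).
  move=> W /= HW; have [N _ HN] := ul _ HW; exists N => // n Nn; exact: (HN n Nn (uK n)).
have H3 : (g \o u) @ \oo --> g l := cvg_trans (cvg_app g H2) H1.
have H4 : (fun n => g (u n) k) @ \oo --> g l k.
  exact: (cvg_trans (cvg_app (proj k) H3) (@proj_continuous nat (fun _ => nat) k (g l))).
have H5 : nbhs (g l k) [set g l k] by [].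
have [N _ HN] := H4 _ H5; exists N => n Nn; exact: HN.
Qed.
Definition Cset (w : seq bool -> baire) : set baire :=
  [set x | exists b : nat -> bool, forall k, exists N, forall n,
     (N <= n)%N -> w (pre b n) k = x k].

Lemma cantor_witness C : is_cantor_set C -> exists w : seq bool -> baire,
  Cset w `<=` C /\ exists phi : (nat -> bool) -> baire,
    injective phi /\ forall b, Cset w (phi b).
Proof.
move=> [h [g [[hC gK hg gh] [_ gc]]]].
have conv b k : exists N, forall n, (N <= n)%N -> g (aa (pre b n)) k = g (ee b) k.
  apply: (cont_seq _ _ _ gc); last exact: ee_cvg.
    by move=> n; apply: inK => m; apply: aa_stage.
  by apply: inK => m; apply: ee_stage.
have eK b : middle_thirds_cantor (ee b) by apply: inK => m; apply: ee_stage.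
exists (fun s => g (aa s)); split.
  move=> x [b Hb].
  suff -> : x = g (ee b) by apply: gK.
  apply: funext => k.
  have [N1 H1] := Hb k; have [N2 H2] := conv b k.
  by rewrite -(H1 (maxn N1 N2)) ?leq_maxl // H2 // leq_maxr.
exists (fun b => g (ee b)); split.
  move=> b b' E; apply: ee_inj.
  by rewrite -(gh _ (eK b)) -(gh _ (eK b')) E.
by move=> b; exists b; apply: conv.
Qed.
Lemma NNPP (P : Prop) : ~ ~ P -> P.
Proof. by move=> h; case: (pselect P) => // /h. Qed.

Lemma no_inj_nat (q : (nat -> bool) -> nat) : ~ injective q.
Proof.
move=> qi.
have Hr m : exists b : nat -> bool, (exists b', q b' = m) -> q b = m.
  case: (pselect (exists b', q b' = m)) => [[b' e]|h]; first by exists b'.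
  by exists (fun _ => false) => H; exfalso; apply: h.
have [r Hr'] := choice Hr.
have rq b : r (q b) = b by apply: qi; apply: Hr'; exists b.
pose d k := ~~ r k k.
have E : r (q d) (q d) = d (q d) by rewrite rq.
by move: E; rewrite /d; case: (r (q d) (q d)).
Qed.

Definition WW := ((seq bool -> baire) * nat * (nat -> bool))%type.
Definition KK := ((seq bool * nat * nat) + (nat + nat))%type.

Definition phiW (i : WW) (k : KK) : bool :=
  let: (w, n, y) := i in
  match k with
  | inl (s, t, j) => w s t == j
  | inr (inl j) => y j
  | inr (inr j) => j == n
  end.

Definition encW (i : WW) : nat -> bool := fun m =>
  match @unpickle KK m with Some k => phiW i k | None => false end.

Lemma encW_inj : injective encW.
Proof.
move=> [[w n] y] [[w' n'] y'] E.
have E' k : phiW (w, n, y) k = phiW (w', n', y') k.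
  by have := congr1 (fun f => f (pickle k)) E; rewrite /encW pickleK.
have -> : w = w'.
  apply: funext => s; apply: funext => t.
  by have := E' (inl (s, t, w s t)); rewrite /= eqxx => /esym/eqP.
have -> : y = y'.
  by apply: funext => j; have := E' (inr (inl j)).
have -> : n = n'.
  by have := E' (inr (inr n)); rewrite /= eqxx => /esym/eqP.
by [].
Qed.

Definition RW : rel WW := proj1_sig (well_ordering_principle WW).
Lemma RW_wo : well_order RW.
Proof. exact: (proj2_sig (well_ordering_principle WW)). Qed.

Lemma RW_total x y : RW x y || RW y x.
Proof.
have ne : nonempty [pred z : WW | (z == x) || (z == y)].
  by exists x; rewrite inE eqxx.
have [z [[zA zlb] _]] := RW_wo _ ne.
move: zA zlb; rewrite inE => /orP [/eqP ->|/eqP ->] zlb.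
  by rewrite zlb // inE eqxx orbT.
by rewrite (zlb x) ?orbT // inE eqxx.
Qed.

Lemma RW_anti x y : RW x y -> RW y x -> x = y.
Proof.
move=> hxy hyx.
have ne : nonempty [pred z : WW | (z == x) || (z == y)].
  by exists x; rewrite inE eqxx.
have [z [_ zu]] := RW_wo _ ne.
have hx : minimum_of RW [pred z : WW | (z == x) || (z == y)] x.
  split; first by rewrite inE eqxx.
  move=> a; rewrite inE => /orP [/eqP ->|/eqP ->] //.
  by have := RW_total x x; rewrite orbb.
have hy : minimum_of RW [pred z : WW | (z == x) || (z == y)] y.
  split; first by rewrite inE eqxx orbT.
  move=> a; rewrite inE => /orP [/eqP ->|/eqP ->] //.
  by have := RW_total y y; rewrite orbb.
by rewrite -(zu _ hx) -(zu _ hy).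
Qed.

Definition ltW (u v : WW) : bool := RW u v && (u != v).

Lemma wf_ltW : well_founded (fun u v => ltW u v).
Proof.
move=> v; apply: NNPP => Hv.
have ne : nonempty [pred u : WW | ~~ `[< Acc (fun u v => ltW u v) u >]].
  by exists v; rewrite inE; apply/asboolPn.
have [m [[mA mlb] _]] := RW_wo _ ne.
move: mA; rewrite inE => /asboolPn; apply.
constructor => u Hu; apply: NNPP => Hu'.
have : RW m u by apply: mlb; rewrite inE; apply/asboolPn.
move: Hu => /andP [h1 h2] h3.
by move: h2; rewrite (RW_anti _ _ h1 h3) eqxx.
Qed.

Definition small (v : WW) :=
  ~ exists j : (nat -> bool) -> WW, injective j /\ forall y, ltW (j y) v.

Lemma exists_iota : exists iota : WW -> WW, injective iota /\ forall i, small (iota i).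
Proof.
case: (pselect (exists v, ~ small v)) => [[v0 hv0]|h]; last first.
  exists id; split => // i Hi; apply: h; exists i => Hs; exact: Hs Hi.
have ne : nonempty [pred v : WW | `[< ~ small v >]].
  by exists v0; rewrite inE.
have [a0 [[aA alb] _]] := RW_wo _ ne.
move: aA; rewrite inE => /NNPP [j [jinj jlt]].
exists (j \o encW); split; first exact: inj_comp jinj encW_inj.
move=> i /= Hs.
have h1 : RW a0 (j (encW i)) by apply: alb; rewrite inE.
move: (jlt (encW i)) => /andP [h2 h3].
by move: h3; rewrite (RW_anti _ _ h2 h1) eqxx.
Qed.

Definition iotaW : WW -> WW := projT1 (cid exists_iota).
Lemma iotaW_inj : injective iotaW.
Proof. exact: (projT2 (cid exists_iota)).1. Qed.
Lemma iotaW_small i : small (iotaW i).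
Proof. exact: (projT2 (cid exists_iota)).2. Qed.

Definition task (v : WW) : option WW :=
  match pselect (exists i, iotaW i = v) with
  | left h => Some (projT1 (cid h))
  | right _ => None
  end.

Lemma task_iota i : task (iotaW i) = Some i.
Proof.
rewrite /task; case: pselect => [h|h]; last by exfalso; apply: h; exists i.
by case: (cid h) => j /= /iotaW_inj ->.
Qed.

Definition pick_out (v : WW) (E : set baire) : option baire :=
  match task v with
  | Some (w, n, y) =>
      match pselect (exists x, Cset w x /\ ~ E x) with
      | left h => Some (projT1 (cid h))
      | right _ => None
      end
  | None => None
  end.

Definition Fstep (v : WW) (rec : forall u, ltW u v -> option baire) : option baire :=
  pick_out v [set x | exists u (h : ltW u v), rec u h = Some x].

Definition pt : WW -> option baire :=
  Fix wf_ltW (fun _ => option baire) Fstep.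

Lemma pt_eq v : pt v = pick_out v [set x | exists u, ltW u v /\ pt u = Some x].
Proof.
rewrite /pt Fix_eq.
  rewrite /Fstep; congr pick_out; apply: funext => x; apply: propext.
  by split => [[u [h E]]|[u [h E]]]; exists u; [split|exists h].
move=> x f g Hfg; rewrite /Fstep; congr pick_out; apply: funext => z.
apply: propext; split => -[u [h E]]; exists u, h; by rewrite ?Hfg // -Hfg.
Qed.

Lemma pt_some v x : pt v = Some x -> exists w n y, task v = Some (w, n, y) /\
  Cset w x /\ (forall u, ltW u v -> pt u <> Some x).
Proof.
rewrite pt_eq /pick_out; case: (task v) => [[[w n] y]|] //.
case: pselect => [h|] // [<-]; case: (cid h) => x' [Cx nE] /=.
exists w, n, y; split => //; split => // u hu E; apply: nE; exists u; split => //.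
Qed.

Lemma pt_inj u v x : pt u = Some x -> pt v = Some x -> u = v.
Proof.
move=> hu hv; case: (eqVneq u v) => // neq.
have [_ [_ [_ [_ [_ Hv]]]]] := pt_some _ _ hv.
have [_ [_ [_ [_ [_ Hu]]]]] := pt_some _ _ hu.
case/orP: (RW_total u v) => h.
  by exfalso; apply: (Hv u) => //; rewrite /ltW h neq.
by exfalso; apply: (Hu v) => //; rewrite /ltW h eq_sym neq.
Qed.

Lemma pt_exists v w n y : task v = Some (w, n, y) -> small v ->
  (exists phi : (nat -> bool) -> baire, injective phi /\ forall b, Cset w (phi b)) ->
  exists x, pt v = Some x.
Proof.
rewrite pt_eq /pick_out => -> Hs [phi [phiI phiC]].
case: pselect => [h|h]; first by eexists.
exfalso; apply: Hs.
have Hb b : exists u, ltW u v /\ pt u = Some (phi b).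
  apply: NNPP => nb; apply: h; exists (phi b); split => //.
have [j Hj] := choice Hb.
exists j; split; last by move=> b; case: (Hj b).
move=> b b' E; apply: phiI.
have [_ E1] := Hj b; have [_ E2] := Hj b'.
by move: E1; rewrite E E2 => -[].
Qed.

Definition GG (x : baire) : nat :=
  match pselect (exists v, pt v = Some x) with
  | left h => match task (projT1 (cid h)) with Some (_, n, _) => n | None => 0%N end
  | right _ => 0%N
  end.

Lemma GG_pt v x w n y : pt v = Some x -> task v = Some (w, n, y) -> GG x = n.
Proof.
move=> Hv Ht; rewrite /GG; case: pselect => [h|h]; last by exfalso; apply: h; exists v.
case: (cid h) => u hu /=.
by rewrite (pt_inj _ _ _ hu Hv) Ht.
Qed.

Definition ff (x : baire) : nat := if GG x == bad x then (GG x).+1 else GG x.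

Lemma ff_bad x : ff x <> bad x.
Proof.
rewrite /ff; case: eqP => [<-|h] //.
by move/eqP; rewrite -[X in _ == X]addn0 -addn1 eqn_add2l.
Qed.

Lemma ff_ge x : (GG x <= ff x)%N.
Proof. by rewrite /ff; case: eqP. Qed.
Theorem mainTheorem13 :
  exists f : baire -> nat,
    I_has_winning_strategy f /\
    (forall (r : RR) (C : set baire), is_cantor_set C ->
       ~ countable (C `&` [set x | r <= ((f x)%:R : RR)])).
Proof.
exists ff; split.
  exists sigma0 => v Hw.
  exact: (ff_bad _ (esym (sigma0_bad v (ff (play_I sigma0 v)) Hw))).
move=> r C HC.
have [w [wC [phi [phiI phiC]]]] := cantor_witness C HC.
pose n := (Num.trunc r).+1.
have Hx y : exists x, pt (iotaW (w, n, y)) = Some x.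
  apply: (pt_exists _ w n y (task_iota _) (iotaW_small _)).
  by exists phi.
have [psi Hpsi] := choice Hx.
have mem y : (C `&` [set x | r <= ((ff x)%:R : RR)]) (psi y).
  have [w' [n' [y' [Ht [Cx _]]]]] := pt_some _ _ (Hpsi y).
  move: Ht Cx; rewrite task_iota => -[<- _ _] Cx; split; first exact: wC.
  have HG := GG_pt _ _ _ _ _ (Hpsi y) (task_iota _).
  apply: (@le_trans _ _ (n%:R)).
    exact: Order.POrderTheory.ltW (truncnS_gt r).
  by rewrite ler_nat -HG ff_ge.
move/countable_injP => [q qinj].
apply: (no_inj_nat (q \o psi)) => y y' /= E.
have E2 : psi y = psi y' by apply: qinj; rewrite ?inE ?mem_set //; apply: mem.
have := Hpsi y; rewrite E2 => Hy.
have := pt_inj _ _ _ Hy (Hpsi y') => /iotaW_inj [].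
by [].
Qed.
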